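(* For all $n,d,w\in\mathbb{N}$, $B_3(n,d,w)=A_2(n,d,w)$.
   Context: Notation: $\mathbb{F}_2=\{0,1\}$. For a code $S\subseteq\mathbb{F}_2^n$, $d_{\min}(S)$ is the minimum Hamming distance between distinct words of $S$ ($+\infty$ if $|S|\le 1$). Let $F\subseteq\mathbb{F}_2^n$ be the set of words of weight $w$. For $k\in\mathbb{Z}_{\ge 0}$, $\mathcal{C}_k$ is the set of codes $C\subseteq F$ with $|C|\le k$. For $j\le k$ and $D\in\mathcal{C}_j$, $\mathcal{C}_j(D):=\{C\in\mathcal{C}_j : C\supseteq D,\ |D|+2|C\setminus D|\le j\}$. For $x:\mathcal{C}_k\to\mathbb{R}$, $M_{j,D}(x)$ is the $\mathcal{C}_j(D)\times\mathcal{C}_j(D)$ matrix with entries $x(C\cup C')$. $A_k(n,d,w)$ is the supremum of $\sum_{v\in F}x(\{v\})$ over all $x:\mathcal{C}_k\to\mathbb{R}$ with $x(\emptyset)=1$, $x(S)=0$ whenever $d_{\min}(S)<d$, and $M_{k,D}(x)$ positive semidefinite for every $D\in\mathcal{C}_k$. For $k\ge 3$, $B_k(n,d,w)$ is the supremum of $\sum_{v\in F}x(\{v\})$ over all $x:\mathcal{C}_k\to\mathbb{R}$ with $x(\emptyset)=1$, $x(S)=0$ whenever $d_{\min}(S)<d$, $M_{k-1,D}(x)$ positive semidefinite for every $D\in\mathcal{C}_{k-1}$ with $|D|<2$, and $M_{k,D}(x)$ positive semidefinite for every $D\in\mathcal{C}_k$ with $|D|\ge 2$. *)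

(* Defs.v *)
From Stdlib Require Import Reals ClassicalEpsilon.
From mathcomp Require Import all_boot.

Unset Implicit Arguments.
Unset Strict Implicit.
Unset Printing Implicit Defensive.

Definition word (n : nat) := {ffun 'I_n -> bool}.

Definition weight n (u : word n) : nat := #|[set i | u i]|.
Definition hamming n (u v : word n) : nat := #|[set i | u i != v i]|.

Definition Fw (n w : nat) : {set word n} := [set u : word n | weight n u == w].

(* "d_min(S) < d", with d_min(S) = +oo when |S| <= 1:
   some two distinct words of S are at Hamming distance < d. *)
Definition dmin_lt n (S : {set word n}) (d : nat) : bool :=
  [exists u in S, exists v in S, (u != v) && (hamming n u v < d)].

Definition Ck (n w k : nat) : {set {set word n}} :=
  [set C : {set word n} | (C \subset Fw n w) && (#|C| <= k)].

Definition CjD (n w j : nat) (D : {set word n}) : {set {set word n}} :=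
  [set C : {set word n} | (C \in Ck n w j) && (D \subset C) && (#|D| + 2 * #|C :\: D| <= j)].

(* M_{j,D}(x) positive semidefinite: the (symmetric) matrix with entries
   x(C u C'), C, C' in C_j(D), has nonnegative quadratic form. *)
Definition psdM (n w j : nat) (D : {set word n}) (x : {set word n} -> R) : Prop :=
  forall v : {set word n} -> R,
    Rle R0 (\big[Rplus/R0]_(C in CjD n w j D)
            \big[Rplus/R0]_(C' in CjD n w j D) (Rmult (Rmult (v C) (v C')) (x (C :|: C')))).

Definition objective n w (x : {set word n} -> R) : R :=
  \big[Rplus/R0]_(u in Fw n w) x [set u].

Definition base_feasible (k n d w : nat) (x : {set word n} -> R) : Prop :=
  x set0 = R1 /\
  (forall S, S \in Ck n w k -> dmin_lt n S d -> x S = R0).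

Definition feasA (k n d w : nat) (t : R) : Prop :=
  exists x : {set word n} -> R,
    base_feasible k n d w x /\
    (forall D, D \in Ck n w k -> psdM n w k D x) /\
    t = objective n w x.

Definition feasB (k n d w : nat) (t : R) : Prop :=
  exists x : {set word n} -> R,
    base_feasible k n d w x /\
    (forall D, D \in Ck n w k.-1 -> #|D| < 2 -> psdM n w k.-1 D x) /\
    (forall D, D \in Ck n w k -> 2 <= #|D| -> psdM n w k D x) /\
    t = objective n w x.

Inductive ereal := Fin of R | PInf | MInf.

Definition esup (E : R -> Prop) : ereal :=
  match excluded_middle_informative (exists t, E t) with
  | right _ => MInf
  | left Hne =>
      match excluded_middle_informative (bound E) with
      | left Hb => Fin (proj1_sig (completeness E Hb Hne))
      | right _ => PInf
      end
  end.

Definition A_val (k n d w : nat) : ereal := esup (feasA k n d w).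
Definition B_val (k n d w : nat) : ereal := esup (feasB k n d w).

(* Main.v *)
Require Import Defs.
From Stdlib Require Import Reals Psatz FunctionalExtensionality PropExtensionality.
From mathcomp Require Import all_boot.
From HB Require Import structures.
From mathcomp Require Import zify.

HB.instance Definition _ := Monoid.isComLaw.Build R R0 Rplus (fun a b c => esym (Rplus_assoc a b c)) Rplus_comm Rplus_0_l.

Lemma CjD1 n w j D : D \in Ck n w j -> j < #|D| + 2 -> CjD n w j D = [set D].
Proof.
move=> HD Hj; apply/setP => C; rewrite !inE.
have HD' := HD; rewrite inE in HD'; case/andP: HD' => DF Dj.
apply/idP/idP.
- case/andP => [/andP [_ DC]] Hc.
  have H0 : #|C :\: D| = 0 by lia.
  have /eqP := cards0_eq H0; rewrite setD_eq0 => CD.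
  by rewrite eqEsubset CD DC.
- move/eqP->; rewrite DF Dj subxx setDv cards0 /= muln0 addn0; exact: Dj.
Qed.

Lemma psdM1 n w j D x : CjD n w j D = [set D] -> (psdM n w j D x <-> Rle R0 (x D)).
Proof.
move=> H; rewrite /psdM H; split.
- move=> /(_ (fun _ => R1)); rewrite !big_set1 setUid; lra.
- move=> Hx v; rewrite !big_set1 setUid.
  apply: Rmult_le_pos => //; nra.
Qed.

Lemma card_union2 n w D C C' : C \in CjD n w 2 D -> C' \in CjD n w 2 D -> #|C :|: C'| <= 2.
Proof.
rewrite !inE => /andP [/andP [_ DC] H1] /andP [/andP [_ DC'] H2].
have s : C :|: C' \subset C :|: (C' :\: D).
  apply/subsetP => z; rewrite !inE => /orP [->//|zC'].
  case zD: (z \in D); first by rewrite (subsetP DC _ zD).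
  by rewrite zC' orbT.
have := subset_leq_card s; rewrite [#|C :|: (C' :\: D)|]cardsU.
have := cardsDS DC; have := subset_leq_card DC; lia.
Qed.

Lemma feq n d w t : feasB 3 n d w t <-> feasA 2 n d w t.
Proof.
split.
- case=> x [[H0 Hz] [Hlo [Hhi ->]]]; exists x; split; [split|split] => //.
  + move=> S HS; apply: Hz; move: HS; rewrite !inE => /andP [-> Hq] /=; exact: leq_trans Hq _.
  + move=> D HD.
    case: (ltnP #|D| 2) => Hc; first by apply: Hlo.
    have HD3 : D \in Ck n w 3 by move: HD; rewrite !inE => /andP [-> Hq] /=; exact: leq_trans Hq _.
    have E2 : CjD n w 2 D = [set D] by apply: CjD1 => //; lia.
    have E3 : CjD n w 3 D = [set D].
      apply: CjD1 => //; move: HD; rewrite inE => /andP [_ Hq]; lia.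
    have := Hhi D HD3 Hc; rewrite /psdM E2 E3 //.
- case=> x [[H0 Hz] [Hp ->]].
  pose x' := fun S : {set word n} => if #|S| <= 2 then x S else R0.
  exists x'; split; [split|split; [|split]].
  + by rewrite /x' cards0.
  + move=> S HS Hb; rewrite /x'; case: ifP => // Hs; apply: Hz => //.
    move: HS; rewrite !inE => /andP [-> _]; exact: Hs.
  + move=> D HD _; have := Hp D HD; rewrite /psdM => H v.
    under eq_bigr => C HC do under eq_bigr => C' HC' do rewrite /x' (@card_union2 n w D C C' HC HC').
    exact: H.
  + move=> D HD Hc.
    have E3 : CjD n w 3 D = [set D].
      apply: CjD1 => //; move: HD; rewrite inE => /andP [_ Hq]; lia.
    apply/psdM1 => //; rewrite /x'; case: ifP => [Hs|]; last by move=> _; lra.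
    have HD2 : D \in Ck n w 2 by move: HD; rewrite !inE => /andP [-> _].
    have E2 : CjD n w 2 D = [set D] by apply: CjD1 => //; lia.
    exact: (proj1 (@psdM1 n w 2 D x E2) (Hp D HD2)).
  + rewrite /objective; apply: eq_bigr => u _; by rewrite /x' cards1.
Qed.

Theorem mainTheorem2 : forall n d w : nat, B_val 3 n d w = A_val 2 n d w.
Proof.
move=> n d w; rewrite /B_val /A_val.
have -> : feasB 3 n d w = feasA 2 n d w.
  apply: functional_extensionality => t; apply: propositional_extensionality; exact: feq.
by [].
Qed.
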